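(* Let $\hat f$ be an estimator built from $Z_n$, and let $A$ be an attack with $x\in A(x)$ for all $x$. Assume $\mathbb E Y^2<\infty$ and the quantities below are finite. Define $T(\hat f)=\mathbb E\big[(\hat f(X)-Y)^2+\sup_{X'\in A(X)}(\hat f(X')-\hat f(X))^2\big]$ and $R_{A,2}(\hat f,f)=\mathbb E\sup_{X'\in A(X)}|\hat f(X')-f(X)|^2$, where expectations are over $Z_n$ and an independent test pair $(X,Y)$. Then $$\frac{T(\hat f)-\mathbb E|f(X)-Y|^2}{5}\le R_{A,2}(\hat f,f)\le2\big[T(\hat f)-\mathbb E|f(X)-Y|^2\big].$$
   Context: $(X,Y)$ is a random pair in $\mathbb R^d\times\mathbb R$, $Z_n$ is an i.i.d. sample of copies of $(X,Y)$ independent of $(X,Y)$, $f(x)=\mathbb E(Y\mid X=x)$, and an attack is a map $A$ assigning to each $x$ in the support $\Omega$ of $X$ a measurable set $A(x)\subseteq\Omega$. $T(\hat f)$ is the TRADES objective with squared loss and balancing parameter $1$. *)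

(* Defs.v *)
From HB Require Import structures.
From mathcomp Require Import all_boot all_order all_algebra.
From mathcomp Require Import all_classical all_reals all_analysis.
From mathcomp Require Import measurable_realfun.

Set Implicit Arguments.
Unset Strict Implicit.
Unset Printing Implicit Defensive.

Import Order.TTheory GRing.Theory Num.Theory.
Local Open Scope classical_set_scope.
Local Open Scope ring_scope.

(* R^d is modelled as [d.-tuple R], equipped by the library with the product
   (= Borel) sigma-algebra generated by the coordinate projections. *)

Section defs.
Context {R : realType}.

(* [f] is (a version of) the regression function x |-> E(Y | X = x):
   a measurable function with f(X) integrable such that
   E[Y 1_{X in B}] = E[f(X) 1_{X in B}] for every measurable B.
   (Conditional expectation requires Y integrable, which is also recorded.) *)
Definition regression_function {dT dV} {T : measurableType dT}
    {V : measurableType dV} (P : probability T R) (X : T -> V) (Y : T -> R)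
    (f : V -> R) : Prop :=
  [/\ measurable_fun setT f,
      P.-integrable setT (EFin \o Y),
      P.-integrable setT (EFin \o (f \o X)) &
      forall B : set V, measurable B ->
        (\int[P]_(t in X @^-1` B) (Y t)%:E =
         \int[P]_(t in X @^-1` B) (f (X t))%:E)%E].

(* Z = (Z_1, ..., Z_n) is an i.i.d. sample of copies of (X, Y): its joint law
   is the n-fold product of the law of (X, Y) (checked on measurable boxes,
   which generate the product sigma-algebra). *)
Definition iid_sample_of {dT dS dV} {T : measurableType dT}
    {S : measurableType dS} {V : measurableType dV}
    (P : probability T R) (X : T -> V) (Y : T -> R)
    (n : nat) (Q : probability S R) (Z : S -> n.-tuple (V * R)%type) : Prop :=
  measurable_fun setT Z /\
  forall B : 'I_n -> set (V * R)%type, (forall i, measurable (B i)) ->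
    Q [set s | forall i, B i (tnth (Z s) i)] =
    (\prod_(i < n) P ((fun t => (X t, Y t)) @^-1` B i))%E.

Definition sup_dev {V : Type} (h : V -> R) (A : V -> set V) (x : V) : \bar R :=
  ereal_sup [set ((h x' - h x) ^+ 2)%:E | x' in A x].

Definition sup_err {V : Type} (h f : V -> R) (A : V -> set V) (x : V) : \bar R :=
  ereal_sup [set (`|h x' - f x| ^+ 2)%:E | x' in A x].

End defs.

(* Main.v *)
Require Import Defs.
From HB Require Import structures.
From mathcomp Require Import all_boot all_order all_algebra.
From mathcomp Require Import all_classical all_reals all_analysis.
From mathcomp Require Import measurable_realfun.
From mathcomp Require Import lra ring.

Set Implicit Arguments.
Unset Strict Implicit.
Unset Printing Implicit Defensive.

Import Order.TTheory GRing.Theory Num.Theory.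
Import numFieldNormedType.Exports.
Import HBSimple HBNNSimple.
Local Open Scope classical_set_scope.
Local Open Scope ring_scope.

Section cond.
Local Open Scope ereal_scope.
Context {R : realType} {dT dV : measure_display} {T : measurableType dT} {V : measurableType dV}.
Variables (P : {measure set T -> \bar R}) (X : T -> V) (W : T -> R).
Hypothesis mX : measurable_fun setT X.
Hypothesis iW : P.-integrable setT (EFin \o W).
Hypothesis HB : forall B, measurable B -> \int[P]_t ((\1_B (X t) * W t)%:E) = 0.

Lemma indic_int (A : set V) : measurable A ->
  P.-integrable setT (fun t => (\1_A (X t) * W t)%:E).
Proof.
move=> mA.
have := @integrableMr _ _ _ P setT measurableT (\1_A \o X) (EFin \o W).
move=> /(_ _ _ iW); apply.
- apply: measurableT_comp => //; exact: measurable_indic.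
- exists 1%R; split => // x x1 t _ /=; rewrite indicE.
  by case: (X t \in A) => /=; [rewrite normr1 ltW | rewrite normr0 (le_trans _ (ltW x1))].
Qed.

Lemma simple0 (phi : {sfun V >-> R}) :
  \int[P]_t ((phi (X t) * W t)%:E) = 0.
Proof.
pose s := fset_set (phi @` setT).
under eq_integral => t _ do
  rewrite (fimfunEord phi (X t)) mulr_suml -sumEFin.
rewrite integral_sum //; last first.
  move=> i; under eq_fun => t do rewrite -mulrA EFinM.
  apply: integrableZl => //; apply: indic_int; exact: measurable_funPTI.
apply: big1 => i _.
under eq_integral => t _ do rewrite -mulrA EFinM.
rewrite integralZl //; last by apply: indic_int; exact: measurable_funPTI.
by rewrite HB ?mule0 //; exact: measurable_funPTI.
Qed.

Lemma nonneg0 (psi : V -> R) : measurable_fun setT psi -> (forall v, 0 <= psi v)%R ->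
  P.-integrable setT (fun t => (psi (X t) * W t)%:E) ->
  \int[P]_t ((psi (X t) * W t)%:E) = 0.
Proof.
move=> mpsi psi0 ipsi.
have mE : measurable_fun setT (EFin \o psi) by exact/measurable_EFinP.
pose g := nnsfun_approx measurableT mE.
have gle n v : (0 <= g n v <= psi v)%R.
  apply/andP; split => //; rewrite -lee_fin /g nnsfun_approxE.
  by apply: le_approx => // x _; rewrite lee_fin.
have mW : measurable_fun setT W.
  by apply/measurable_EFinP; exact: (measurable_int _ iW).
have H : \int[P]_t (g n (X t) * W t)%:E @[n --> \oo] --> \int[P]_t (psi (X t) * W t)%:E.
  apply: (@dominated_cvg _ _ _ P setT measurableT _ _ (fun t => `|(psi (X t) * W t)%:E|)).
  - move=> n; apply/measurable_EFinP; apply: measurable_funM => //.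
    by apply: measurableT_comp => //.
  - move=> t _; under eq_fun => n do rewrite EFinM.
    rewrite EFinM; apply: cvgeZr => //.
    by apply: (@cvg_nnsfun_approx _ _ _ _ measurableT (EFin \o psi) mE) => // x _; rewrite lee_fin.
  - by [].
  - exact: integrable_abse.
  - move=> n t _; rewrite !abse_EFin lee_fin !normrM ler_wpM2r //.
    have /andP[h1 h2] := gle n (X t).
    by rewrite !ger0_norm // (le_trans h1 h2).
have E : (fun n => \int[P]_t (g n (X t) * W t)%:E) = fun _ => 0.
  by apply/funext => n; exact: simple0.
rewrite E in H; have H0 := cvg_lim (@ereal_hausdorff R) H; rewrite -H0; exact: lim_cst.
Qed.

Lemma signed0 (psi : V -> R) : measurable_fun setT psi ->
  P.-integrable setT (fun t => (psi (X t) * W t)%:E) ->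
  \int[P]_t ((psi (X t) * W t)%:E) = 0.
Proof.
move=> mpsi ipsi.
have mW : measurable_fun setT W.
  by apply/measurable_EFinP; exact: (measurable_int _ iW).
have hpn v : (`|psi^\+ v| <= `|psi v| /\ `|psi^\- v| <= `|psi v|)%R.
  have := congr1 (fun h => h v) (funrposDneg psi) => /= <-.
  rewrite !ger0_norm ?funrpos_ge0 ?funrneg_ge0 //.
  by split; [rewrite lerDl funrneg_ge0 | rewrite lerDr funrpos_ge0].
have ip : P.-integrable setT (fun t => (psi^\+ (X t) * W t)%:E).
  apply: le_integrable ipsi => //.
    apply/measurable_EFinP; apply: measurable_funM => //.
    by apply: measurableT_comp => //; exact: measurable_funrpos.
  by move=> t _; rewrite !abse_EFin lee_fin !normrM ler_wpM2r // (hpn _).1.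
have im : P.-integrable setT (fun t => (psi^\- (X t) * W t)%:E).
  apply: le_integrable ipsi => //.
    apply/measurable_EFinP; apply: measurable_funM => //.
    by apply: measurableT_comp => //; exact: measurable_funrneg.
  by move=> t _; rewrite !abse_EFin lee_fin !normrM ler_wpM2r // (hpn _).2.
transitivity (\int[P]_t (((fun t => (psi^\+ (X t) * W t)%:E) \-
                         (fun t => (psi^\- (X t) * W t)%:E)) t)).
  apply: eq_integral => t _ /=.
  have := congr1 (fun h => h (X t)) (funrposBneg psi) => /= {1}<-.
  by rewrite mulrBl EFinB.
rewrite integralB // !nonneg0 ?subee //.
all: try exact: measurable_funrneg.
all: try exact: measurable_funrpos.
all: try (move=> v; exact: funrneg_ge0).
all: try (move=> v; exact: funrpos_ge0).
Qed.
End cond.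

Section l2.
Local Open Scope ereal_scope.
Context {R : realType} {dT dV : measure_display} {T : measurableType dT} {V : measurableType dV}.
Variables (P : {measure set T -> \bar R}) (X : T -> V) (Y : T -> R) (f : V -> R).
Hypotheses (mX : measurable_fun setT X) (mf : measurable_fun setT f).
Hypotheses (iY : P.-integrable setT (EFin \o Y))
           (ifX : P.-integrable setT (EFin \o (f \o X))).
Hypothesis HB' : forall B, measurable B ->
  \int[P]_(t in X @^-1` B) (Y t)%:E = \int[P]_(t in X @^-1` B) (f (X t))%:E.

Let W t := (Y t - f (X t))%R.
Lemma cond_iW : P.-integrable setT (EFin \o W).
Proof. exact: (integrableB measurableT iY ifX). Qed.

Let mW : measurable_fun setT W.
Proof. by apply/measurable_EFinP; exact: (measurable_int _ cond_iW). Qed.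

Lemma cond_HB B : measurable B -> \int[P]_t ((\1_B (X t) * W t)%:E) = 0.
Proof.
move=> mB.
have mXB : measurable (X @^-1` B) by rewrite -[X @^-1` B]setTI; exact: mX.
transitivity (\int[P]_t (((EFin \o W) \_ (X @^-1` B)) t)).
  apply: eq_integral => t _; rewrite patchE indicE.
  case: ifPn => h.
    by rewrite (mem_set (set_mem h : B (X t))) mul1r.
  rewrite memNset ?mul0r // => hb; move/negP: h; apply; exact: mem_set.
rewrite -integral_mkcond.
transitivity (\int[P]_(t in X @^-1` B) (((EFin \o Y) \- (EFin \o (f \o X))) t)) => //.
rewrite integralB //; last 2 first.
- exact: (integrableS measurableT).
- exact: (integrableS measurableT).
rewrite HB' // subee // (integrable_fin_num mXB) //.
exact: (integrableS measurableT).
Qed.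

Hypothesis iY2 : P.-integrable setT (fun t => (Y t ^+ 2)%:E).

Lemma sq_int : P.-integrable setT (fun t => (f (X t) ^+ 2)%:E).
Proof.
pose A (k : nat) := [set v | `|f v| <= k%:R]%R.
have mA k : measurable (A k).
  rewrite -[A k]setTI; apply: measurable_fun_le => //.
  exact: measurableT_comp.
pose psi k v := (f v * \1_(A k) v)%R.
have mpsi k : measurable_fun setT (psi k).
  by apply: measurable_funM => //; exact: measurable_indic.
have bpsi k v : (`|psi k v| <= k%:R)%R.
  rewrite /psi indicE; have [h|h] := boolP (v \in A k).
    by rewrite mulr1; exact: (set_mem h).
  by rewrite mulr0 normr0.
have iM k (g : T -> R) : P.-integrable setT (EFin \o g) ->
    P.-integrable setT (fun t => (psi k (X t) * g t)%:E).
  move=> ig.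
  have := @integrableMr _ _ _ P setT measurableT (psi k \o X) _ _ _ ig.
  apply => //; first exact: measurableT_comp.
  exists k%:R; split; first exact: num_real.
  by move=> x hx t _; exact: (le_trans (bpsi k (X t)) (ltW hx)).
have zero k : \int[P]_t ((psi k (X t) * W t)%:E) = 0.
  exact: (signed0 mX cond_iW cond_HB (mpsi k) (iM k _ cond_iW)).
have eqk k : \int[P]_t ((psi k (X t) * Y t)%:E) =
             \int[P]_t ((psi k (X t) * f (X t))%:E).
  have := zero k.
  under eq_integral => t _ do rewrite /W mulrBr EFinB.
  rewrite integralB //; [|exact: iM|exact: iM].
  move/eqP; rewrite sube_eq ?add0e; first by move/eqP.
    exact: integrable_fin_num (iM k _ iY).
  by rewrite fin_num_adde_defl // (integrable_fin_num measurableT (iM k _ ifX)).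
pose q k t := (f (X t) ^+ 2 * \1_(A k) (X t))%R.
have psiq k t : (psi k (X t) * f (X t) = q k t)%R.
  by rewrite /psi /q mulrAC expr2.
have psi2 k t : (psi k (X t) ^+ 2 = q k t)%R.
  rewrite /psi /q indicE.
  by case: (X t \in A k); rewrite ?mulr1 ?mulr0 // expr0n.
have iq k : P.-integrable setT (fun t => (q k t)%:E).
  by apply: (eq_integrable measurableT _ _ _ (iM k _ ifX)) => t _; rewrite /= psiq.
have bound k : \int[P]_t (q k t)%:E <= \int[P]_t (Y t ^+ 2)%:E.
  have h1 : \int[P]_t (q k t)%:E <=
      \int[P]_t ((2^-1)%:E * ((q k t)%:E + (Y t ^+ 2)%:E)).
    under eq_integral => t _ do rewrite -psiq.
    rewrite -eqk; apply: le_integral => //; first exact: iM.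
      apply: integrableZl => //; apply: integrableD => //.
    move=> t _; rewrite -EFinD -EFinM lee_fin -(psi2 k t).
    have := sqr_ge0 (psi k (X t) - Y t).
    move: (psi k (X t)) (Y t) => a b; rewrite sqrrB => h.
    by lra.
  move: h1; rewrite integralZl //; last exact: integrableD.
  rewrite integralD //.
  have /fineK <- := integrable_fin_num measurableT (iq k).
  have /fineK <- := integrable_fin_num measurableT iY2.
  rewrite -EFinD -EFinM !lee_fin.
  by lra.
have q0 k t : (0 <= q k t)%R.
  by rewrite /q mulr_ge0 // ?sqr_ge0 // indicE ler0n.
have mq k : measurable_fun setT (fun t => (q k t)%:E).
  exact: (measurable_int _ (iq k)).
have ndq t : nondecreasing_seq ((fun k t => (q k t)%:E)^~ t).
  move=> m n mn; rewrite lee_fin /q ler_wpM2l ?sqr_ge0 // !indicE.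
  have [h|//] := boolP (X t \in A m).
  rewrite (mem_set (_ : A n (X t))) //.
  by apply: (le_trans (set_mem h : A m (X t))); rewrite ler_nat.
have limq t : limn ((fun k t => (q k t)%:E)^~ t) = (f (X t) ^+ 2)%:E.
  apply: cvg_lim => //; apply: cvg_near_cst.
  exists (Num.truncn `|f (X t)|).+1 => // k /= hk.
  rewrite /q indicE (mem_set (_ : A k (X t))) ?mulr1 //.
  rewrite /A /= ltW // (lt_le_trans (truncnS_gt _)) //.
  by rewrite ler_nat.
have MC := @monotone_convergence _ _ _ P setT measurableT
  (fun k t => (q k t)%:E) mq (fun k t _ => q0 k t) (fun t _ => ndq t).
apply/integrableP; split.
  apply/measurable_EFinP; apply: measurable_funX.
  exact: measurableT_comp.
under eq_integral => t _ do rewrite gee0_abs ?lee_fin ?sqr_ge0 //.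
under eq_integral => t _ do rewrite -limq.
rewrite MC; apply: (le_lt_trans (y := \int[P]_t (Y t ^+ 2)%:E)).
  apply: lime_le.
    apply: ereal_nondecreasing_is_cvgn => m n mn.
    by apply: ge0_le_integral => // t _; try exact: ndq; rewrite lee_fin.
  by apply: nearW => k; exact: bound.
by apply: integrable_lty.
Qed.
End l2.

Section lift.
Local Open Scope ereal_scope.
Context {R : realType} {dS dT : measure_display} {S : measurableType dS} {T : measurableType dT}.
Variables (Q : probability S R) (P : probability T R).

Lemma int_snd (phi : T -> \bar R) : measurable_fun setT phi -> (forall t, 0 <= phi t) ->
  \int[Q \x P]_p phi p.2 = \int[P]_t phi t.
Proof.
move=> mphi phi0.
rewrite fubini_tonelli1 //; last first.
  exact: measurableT_comp mphi measurable_snd.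
transitivity (\int[Q]_s (\int[P]_t phi t)); first by apply: eq_integral.
have := @integral_cst _ _ _ Q setT measurableT (\int[P]_t phi t).
rewrite /cst => ->.
by rewrite [X in _ * X](_ : _ = 1) ?mule1 //; exact: probability_setT.
Qed.

Lemma int_snd_integrable (phi : T -> \bar R) : P.-integrable setT phi ->
  (Q \x P).-integrable setT (fun p => phi p.2).
Proof.
move=> /integrableP [mphi iphi]; apply/integrableP; split.
  exact: measurableT_comp mphi measurable_snd.
rewrite (int_snd (phi := fun t => `|phi t|)) //.
exact: measurableT_comp.
Qed.

Lemma ae_snd (Pr : T -> Prop) : {ae P, forall t, Pr t} -> {ae Q \x P, forall p, Pr p.2}.
Proof.
case=> N [mN PN sub]; exists (setT `*` N); split.
- exact: measurableX.
- by rewrite product_measure1E // [X in _ * X](_ : _ = 0) ?mule0.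
- by move=> [s t] /= hp; split => //; apply: sub => /= h; apply: hp.
Qed.
End lift.

Section sups.
Local Open Scope ereal_scope.
Context {R : realType} {V : Type}.

Lemma sup_dev_cases (h : V -> R) A x :
  sup_dev h A x = -oo \/ 0 <= sup_dev h A x.
Proof.
case: (pselect (exists x', A x x')) => [[x' Ax']|nA]; [right|left].
  apply: le_ereal_sup_tmp; exists ((h x' - h x) ^+ 2)%:E; first by exists x'.
  by rewrite lee_fin sqr_ge0.
apply/ereal_sup_ninfty => y [x' Ax' _]; exfalso; apply: nA; by exists x'.
Qed.

Lemma sup_err_cases (h f : V -> R) A x :
  sup_err h f A x = -oo \/ 0 <= sup_err h f A x.
Proof.
case: (pselect (exists x', A x x')) => [[x' Ax']|nA]; [right|left].
  apply: le_ereal_sup_tmp; exists ((`|h x' - f x|) ^+ 2)%:E; first by exists x'.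
  by rewrite lee_fin sqr_ge0.
apply/ereal_sup_ninfty => y [x' Ax' _]; exfalso; apply: nA; by exists x'.
Qed.

Lemma up_pt (h f : V -> R) A x :
  maxe (sup_err h f A x) 0 <=
  2%:E * maxe (sup_dev h A x) 0 + 2%:E * ((h x - f x) ^+ 2)%:E.
Proof.
have ge0 : 0 <= 2%:E * maxe (sup_dev h A x) 0 + 2%:E * ((h x - f x) ^+ 2)%:E.
  by apply: adde_ge0; apply: mule_ge0; rewrite ?le_max ?lexx ?orbT ?lee_fin ?sqr_ge0.
rewrite ge_max ge0 andbT; apply: ge_ereal_sup => _ [x' Ax' <-].
apply: (@le_trans _ _ (2%:E * ((h x' - h x) ^+ 2)%:E + 2%:E * ((h x - f x) ^+ 2)%:E)).
  rewrite -!EFinM -EFinD lee_fin.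
  have := sqr_ge0 (h x' + f x - 2 * h x).
  rewrite real_normK ?num_real //.
  move: (h x') (h x) (f x) => a b c; rewrite !sqrrB !sqrrD => H.
  by nra.
apply: leeD2r; apply: lee_wpmul2l => //.
rewrite le_max; apply/orP; left; apply: ereal_sup_ubound; by exists x'.
Qed.

Lemma low_pt (h f : V -> R) A x : A x x ->
  maxe (sup_dev h A x) 0 + ((h x - f x) ^+ 2)%:E <= 5%:E * maxe (sup_err h f A x) 0.
Proof.
move=> Axx.
have E0 : ((h x - f x) ^+ 2)%:E <= sup_err h f A x.
  apply: ereal_sup_ubound; exists x => //; by rewrite real_normK ?num_real.
have s0 : 0 <= sup_err h f A x by apply: le_trans E0; rewrite lee_fin sqr_ge0.
rewrite (@max_idPl _ _ (sup_err h f A x) 0 s0).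
move: E0 s0; set S := sup_err h f A x => E0 s0.
have E1 x' : A x x' -> ((`|h x' - f x|) ^+ 2)%:E <= S.
  move=> Ax'; apply: ereal_sup_ubound; by exists x'.
case: S E0 s0 E1 => [s| |] E0 s0 E1; last by [].
  have Dle : sup_dev h A x <= (4 * s)%:E.
    apply: ge_ereal_sup => _ [x' Ax' <-].
    have := E1 _ Ax'; rewrite !lee_fin real_normK ?num_real //.
    move: E0; rewrite lee_fin => E0 E1'.
    have := sqr_ge0 (h x' + h x - 2 * f x).
    move: (h x') (h x) (f x) E0 E1' => a b c; rewrite !sqrrB !sqrrD => H0 H1 H.
    by nra.
  move: E0 s0; rewrite !lee_fin => E0 s0.
  have [d0|d0] := leP 0 (sup_dev h A x).
    idtac.
    move: Dle d0; case: (sup_dev h A x) => [dd| |] //; rewrite !lee_fin.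
    by move=> ? ?; lra.
  rewrite add0e -EFinM lee_fin; lra.
by rewrite gt0_muley ?lte_fin // leey.
Qed.
End sups.

Section cross.
Local Open Scope ereal_scope.
Context {R : realType} {dS dT dV dU : measure_display} {S : measurableType dS}
  {T : measurableType dT} {V : measurableType dV} {U : measurableType dU}.
Variables (Q : probability S R) (P : probability T R).
Variables (X : T -> V) (Y : T -> R) (f : V -> R) (Z : S -> U) (g : U -> V -> R).
Hypotheses (mX : measurable_fun setT X) (mf : measurable_fun setT f)
  (mZ : measurable_fun setT Z)
  (mg : measurable_fun setT (fun zx : (U * V)%type => g zx.1 zx.2)).
Hypotheses (iY : P.-integrable setT (EFin \o Y))
           (ifX : P.-integrable setT (EFin \o (f \o X))).
Hypothesis HB' : forall B, measurable B ->
  \int[P]_(t in X @^-1` B) (Y t)%:E = \int[P]_(t in X @^-1` B) (f (X t))%:E.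

Lemma cross0 :
  (Q \x P).-integrable setT
    (fun p => ((g (Z p.1) (X p.2) - f (X p.2)) * (f (X p.2) - Y p.2))%:E) ->
  \int[Q \x P]_p ((g (Z p.1) (X p.2) - f (X p.2)) * (f (X p.2) - Y p.2))%:E = 0.
Proof.
move=> ic.
rewrite -(integral12_prod_meas1 ic).
rewrite (ae_eq_integral (cst 0)) //; first by rewrite integral0.
- exact: (measurable_fubini_F ic).
- apply: filterS (ae_integrable1 ic) => s hs _.
  rewrite /fubini_F /cst /=.
  have mgs : measurable_fun setT (fun v => f v - g (Z s) v)%R.
    apply: measurable_funB => //.
    apply: (measurableT_comp (f := fun zx : (U * V)%type => g zx.1 zx.2)
             (g := fun v => (Z s, v))) => //.
    exact: measurable_fun_pair.
  transitivity (\int[P]_t (((f (X t) - g (Z s) (X t)) * (Y t - f (X t)))%R)%:E).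
    by apply: eq_integral => t _; congr EFin; ring.
  apply: (signed0 mX (cond_iW iY ifX) (cond_HB mX iY ifX HB') mgs).
  apply: (eq_integrable measurableT _ _ _ hs) => t _ /=; congr EFin; ring.
Qed.
End cross.

Section intsq.
Local Open Scope ereal_scope.
Context {R : realType} {d : measure_display} {T : measurableType d}.
Variable mu : {measure set T -> \bar R}.
Variables (a b : T -> R).
Hypotheses (ma : measurable_fun setT a) (mb : measurable_fun setT b).
Hypotheses (ia : mu.-integrable setT (fun t => (a t ^+ 2)%:E))
           (ib : mu.-integrable setT (fun t => (b t ^+ 2)%:E)).

Let isum : mu.-integrable setT (fun t => ((2 * a t ^+ 2) + (2 * b t ^+ 2))%R%:E).
Proof.
apply: (eq_integrable measurableT (fun t => 2%:E * (a t ^+ 2)%:E + 2%:E * (b t ^+ 2)%:E)).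
  by move=> t _.
by apply: integrableD => //; apply: integrableZl.
Qed.

Lemma int_sqB : mu.-integrable setT (fun t => ((a t - b t) ^+ 2)%:E).
Proof.
apply: le_integrable isum => //.
  by apply/measurable_EFinP; apply: measurable_funX; exact: measurable_funB.
move=> t _; rewrite !abse_EFin lee_fin !ger0_norm ?sqr_ge0 //; last first.
  by apply: addr_ge0; apply: mulr_ge0 => //; exact: sqr_ge0.
have := sqr_ge0 (a t + b t); move: (a t) (b t) => x y.
rewrite sqrrB sqrrD => H; lra.
Qed.

Lemma int_mul : mu.-integrable setT (fun t => (a t * b t)%:E).
Proof.
apply: le_integrable isum => //.
  by apply/measurable_EFinP; exact: measurable_funM.
move=> t _; rewrite !abse_EFin lee_fin [X in (_ <= X)%R]ger0_norm; last first.
  by apply: addr_ge0; apply: mulr_ge0 => //; exact: sqr_ge0.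
rewrite normrM.
have ea : (`|a t| ^+ 2 = a t ^+ 2)%R by rewrite real_normK // num_real.
have eb : (`|b t| ^+ 2 = b t ^+ 2)%R by rewrite real_normK // num_real.
rewrite -ea -eb; have := sqr_ge0 (`|a t| - `|b t|)%R.
move: `|a t|%R `|b t|%R => x y; rewrite sqrrB => H; nra.
Qed.
End intsq.

Lemma ge0_int_fin {R : realType} {d : measure_display} {T : measurableType d}
  (mu : {measure set T -> \bar R}) (h : T -> \bar R) :
  measurable_fun setT h -> (forall x, (0 <= h x)%E) -> (\int[mu]_x h x < +oo)%E ->
  mu.-integrable setT h.
Proof.
move=> mh h0 hf; apply/integrableP; split => //.
by under eq_integral => x _ do rewrite gee0_abs //.
Qed.

Unset Implicit Arguments.
Theorem mainTheorem13 (R : realType) (d n : nat)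
    (dT : measure_display) (T : measurableType dT) (P : probability T R)
    (dS : measure_display) (S : measurableType dS) (Q : probability S R)
    (X : T -> d.-tuple R) (Y : T -> R)
    (Z : S -> n.-tuple (d.-tuple R * R)%type)
    (f : d.-tuple R -> R)
    (g : n.-tuple (d.-tuple R * R)%type -> d.-tuple R -> R)
    (A : d.-tuple R -> set (d.-tuple R)) :
  measurable_fun setT X -> measurable_fun setT Y ->
  iid_sample_of P X Y Q Z ->
  regression_function P X Y f ->
  measurable_fun setT
    (fun zx : (n.-tuple (d.-tuple R * R)%type * d.-tuple R)%type => g zx.1 zx.2) ->
  (forall x, measurable (A x)) ->
  {ae P, forall t, A (X t) (X t)} ->
  P.-integrable setT (fun t => (Y t ^+ 2)%:E) ->
  measurable_fun setT (fun p : (S * T)%type => (sup_dev (g (Z p.1)) A (X p.2) : \bar R)) ->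
  measurable_fun setT (fun p : (S * T)%type => (sup_err (g (Z p.1)) f A (X p.2) : \bar R)) ->
  let TRADES := (\int[Q \x P]_p
      (((g (Z p.1) (X p.2) - Y p.2) ^+ 2)%:E + sup_dev (g (Z p.1)) A (X p.2)))%E in
  let RA2 := (\int[Q \x P]_p sup_err (g (Z p.1)) f A (X p.2))%E in
  let Bayes := (\int[P]_t ((`|f (X t) - Y t| ^+ 2)%:E))%E in
  (TRADES < +oo)%E -> (RA2 < +oo)%E ->
  ((TRADES - Bayes) * ((5 : R)^-1)%:E <= RA2)%E /\
  (RA2 <= 2%:E * (TRADES - Bayes))%E.

Proof.
move=> mX mY [mZ _] [mf iY ifX HB'] mg _ aeA iY2 mD mE TR RA BA hT _.
rewrite /TR /RA /BA {TR RA BA} in hT *.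
have mH : measurable_fun setT (fun p : (S * T)%type => g (Z p.1) (X p.2)).
  apply: (measurableT_comp (f := fun zx : (n.-tuple (d.-tuple R * R)%type * d.-tuple R)%type => g zx.1 zx.2)
             (g := fun p : (S * T)%type => (Z p.1, X p.2))) => //.
  apply: measurable_fun_pair.
    exact: (measurableT_comp mZ measurable_fst).
  exact: (measurableT_comp mX measurable_snd).
have mFp : measurable_fun setT (fun p : (S * T)%type => f (X p.2)).
  by apply: measurableT_comp mf _; exact: (measurableT_comp mX measurable_snd).
have mYp : measurable_fun setT (fun p : (S * T)%type => Y p.2).
  exact: (measurableT_comp mY measurable_snd).
have iF2 := sq_int mX mf iY ifX HB' iY2.
have iY2p := int_snd_integrable Q iY2.
have iF2p := int_snd_integrable Q iF2.
have iB := int_sqB mFp mYp iF2p iY2p.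
have aeA' := ae_snd Q aeA.
pose Dp := fun p : (S * T)%type => sup_dev (g (Z p.1)) A (X p.2).
pose Ep := fun p : (S * T)%type => sup_err (g (Z p.1)) f A (X p.2).
have mD' : measurable_fun setT (fun p => maxe (Dp p) 0%E).
  by apply: measurable_maxe => //; exact: measurable_cst.
have mE' : measurable_fun setT (fun p => maxe (Ep p) 0%E).
  by apply: measurable_maxe => //; exact: measurable_cst.
have D'0 p : (0 <= maxe (Dp p) 0)%E by rewrite le_max lexx orbT.
have E'0 p : (0 <= maxe (Ep p) 0)%E by rewrite le_max lexx orbT.
have msq1 : measurable_fun setT
    (fun p : (S * T)%type => ((g (Z p.1) (X p.2) - Y p.2) ^+ 2)%:E).
  by apply/measurable_EFinP; apply: measurable_funX; exact: measurable_funB.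
have msq2 : measurable_fun setT
    (fun p : (S * T)%type => ((g (Z p.1) (X p.2) - f (X p.2)) ^+ 2)%:E).
  by apply/measurable_EFinP; apply: measurable_funX; exact: measurable_funB.
have TE : (\int[Q \x P]_p (((g (Z p.1) (X p.2) - Y p.2) ^+ 2)%:E + Dp p) =
          \int[Q \x P]_p ((g (Z p.1) (X p.2) - Y p.2) ^+ 2)%:E +
          \int[Q \x P]_p maxe (Dp p) 0)%E.
  rewrite -ge0_integralD //; last by move=> p _; rewrite lee_fin sqr_ge0.
  apply: ae_eq_integral => //.
  - exact: emeasurable_funD.
  - exact: emeasurable_funD.
  apply: filterS aeA' => p hA _; congr (_ + _); apply/esym/max_idPl.
  apply: le_ereal_sup_tmp; exists 0%:E; last by [].
  by exists (X p.2) => //; rewrite subrr expr0n.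
have [hsq1 hD'] : ((\int[Q \x P]_p ((g (Z p.1) (X p.2) - Y p.2) ^+ 2)%:E < +oo) /\
                   (\int[Q \x P]_p maxe (Dp p) 0 < +oo))%E.
  move: hT; rewrite TE => hT; split.
    apply: le_lt_trans hT; apply: leeDl; exact: integral_ge0.
  apply: le_lt_trans hT; apply: leeDr; apply: integral_ge0 => p _.
  by rewrite lee_fin sqr_ge0.
have isq1 := ge0_int_fin msq1 (fun p => sqr_ge0 _) hsq1.
have iD' := ge0_int_fin mD' D'0 hD'.
have mHY : measurable_fun setT (fun p : (S * T)%type => g (Z p.1) (X p.2) - Y p.2).
  exact: measurable_funB.
have mFY : measurable_fun setT (fun p : (S * T)%type => f (X p.2) - Y p.2).
  exact: measurable_funB.
have isq2 : (Q \x P)%E.-integrable setT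
    (fun p : (S * T)%type => ((g (Z p.1) (X p.2) - f (X p.2)) ^+ 2)%:E).
  apply: (eq_integrable measurableT _ _ _ (int_sqB mHY mFY isq1 iB)).
  by move=> p _; congr EFin; congr (_ ^+ 2); ring.
have mHF : measurable_fun setT (fun p : (S * T)%type => g (Z p.1) (X p.2) - f (X p.2)).
  exact: measurable_funB.
have ic := int_mul mHF mFY isq2 iB.
have c0 := (@cross0 _ _ _ _ _ _ _ _ _ Q P X Y f Z g mX mf mg iY ifX HB' ic).
have decomp : (\int[Q \x P]_p ((g (Z p.1) (X p.2) - Y p.2) ^+ 2)%:E =
   \int[Q \x P]_p ((g (Z p.1) (X p.2) - f (X p.2)) ^+ 2)%:E +
   \int[Q \x P]_p ((f (X p.2) - Y p.2) ^+ 2)%:E)%E.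
  transitivity (\int[Q \x P]_p (((g (Z p.1) (X p.2) - f (X p.2)) ^+ 2)%:E +
     (2%:E * ((g (Z p.1) (X p.2) - f (X p.2)) * (f (X p.2) - Y p.2))%:E +
      ((f (X p.2) - Y p.2) ^+ 2)%:E)))%E.
    by apply: eq_integral => p _; rewrite -EFinM -!EFinD; congr EFin; ring.
  rewrite integralD //; last by apply: integrableD => //; exact: integrableZl.
  rewrite integralD //; last exact: integrableZl.
  by rewrite integralZl // c0 mule0 add0e.
have BE : (\int[P]_t (`|f (X t) - Y t| ^+ 2)%:E =
           \int[Q \x P]_p ((f (X p.2) - Y p.2) ^+ 2)%:E)%E.
  rewrite (@int_snd _ _ _ _ _ Q P (fun t => ((f (X t) - Y t) ^+ 2)%:E)).
  - by apply: eq_integral => t _; rewrite real_normK // num_real.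
  - apply/measurable_EFinP; apply: measurable_funX; apply: measurable_funB => //.
    exact: measurableT_comp.
  - by move=> t; rewrite lee_fin sqr_ge0.
have RE : (\int[Q \x P]_p Ep p = \int[Q \x P]_p maxe (Ep p) 0)%E.
  apply: ae_eq_integral => //.
  apply: filterS aeA' => p hA _; apply/esym/max_idPl.
  apply: le_ereal_sup_tmp; exists (`|g (Z p.1) (X p.2) - f (X p.2)| ^+ 2)%:E.
    by exists (X p.2).
  by rewrite lee_fin sqr_ge0.
have up : (\int[Q \x P]_p maxe (Ep p) 0 <=
   2%:E * \int[Q \x P]_p maxe (Dp p) 0 +
   2%:E * \int[Q \x P]_p ((g (Z p.1) (X p.2) - f (X p.2)) ^+ 2)%:E)%E.
  rewrite -integralZl // -[X in (_ <= _ + X)%E]integralZl //.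
  rewrite -integralD //; last 2 first.
  - exact: integrableZl.
  - exact: integrableZl.
  apply: ge0_le_integral => //.
  - by apply: emeasurable_funD; apply: emeasurable_funM => //.
  - by move=> p _; exact: up_pt.
have low : (\int[Q \x P]_p maxe (Dp p) 0 +
   \int[Q \x P]_p ((g (Z p.1) (X p.2) - f (X p.2)) ^+ 2)%:E <=
   5%:E * \int[Q \x P]_p maxe (Ep p) 0)%E.
  rewrite -integralD // -ge0_integralZl //.
  apply: ae_ge0_le_integral => //.
  - by move=> p _; apply: adde_ge0 => //; rewrite lee_fin sqr_ge0.
  - exact: emeasurable_funD.
  - by move=> p _; apply: mule_ge0.
  - by apply: emeasurable_funM.
  apply: filterS aeA' => p hA _; exact: low_pt.
rewrite TE decomp BE RE; move: up low.
have /fineK <- := integrable_fin_num measurableT isq2.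
have /fineK <- := integrable_fin_num measurableT iB.
have /fineK <- := integrable_fin_num measurableT iD'.
case: (\int[Q \x P]_p maxe (Ep p) 0)%E => [r| |].
  do 6 rewrite -?EFinM -?EFinD -?EFinB; rewrite !lee_fin => h1 h2.
  split; lra.
- by [].
- move=> _; rewrite gt0_muleNy ?lte_fin // -EFinD leeNy_eq.
Qed.
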